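(* Let $X,Y$ be Hilbert spaces, $U:=X\times Y$, $K\in\mathcal{L}(X;Y)$, and let $\partial G:X\rightrightarrows X$ and $\partial F^*:Y\rightrightarrows Y$ be set-valued maps. Define $H:U\rightrightarrows U$ by $H(x,y):=\big(\partial G(x)+K^*y\big)\times\big(\partial F^*(y)-Kx\big)$. Fix $i\in\mathbb{N}$, $\tau_i,\sigma_{i+1},\phi_i,\psi_{i+1}>0$, $\gamma,\rho\ge0$, and set \[ W_{i+1}:=\begin{pmatrix}\tau_iI&0\\0&\sigma_{i+1}I\end{pmatrix},\quad Z_{i+1}:=\begin{pmatrix}\phi_iI&0\\0&\psi_{i+1}I\end{pmatrix},\quad \Xi_{i+1}:=\begin{pmatrix}\gamma\tau_iI&2\tau_iK^*\\-2\sigma_{i+1}K&\rho\sigma_{i+1}I\end{pmatrix}. \] Let $Z_{i+2},M_{i+2}\in\mathcal{L}(U;U)$ with $Z_{i+2}M_{i+2}$ self-adjoint and positive semidefinite. Let $\hat u\in H^{-1}(0)$ and suppose there is a neighbourhood $\mathcal{U}$ of $\hat u$ such that for all $u=(x,y)\in\mathcal{U}$, $q\in\partial G(x)$, $z\in\partial F^*(y)$, \[ \inf_{(x^*,y^* )\in H^{-1}(0)}\Big[\langle q+K^*y^*,x-x^*\rangle-\tfrac{\gamma}{2}\|x-x^*\|^2\Big]\ge0,\qquad \inf_{(x^*,y^* )\in H^{-1}(0)}\Big[\langle z-Kx^*,y-y^*\rangle-\tfrac{\rho}{2}\|y-y^*\|^2\Big]\ge0. \] Then $H$ is $(Z_{i+1}\Xi_{i+1},2Z_{i+1}W_{i+1},Z_{i+2}M_{i+2})$-partially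 strongly submonotone at $(\hat u,0)$.
   Context: For $T\in\mathcal{L}(U;U)$: $\langle x,z\rangle_T:=\langle Tx,z\rangle$, $\|x\|^2_T:=\langle Tx,x\rangle$, $\operatorname{dist}^2_T(z,A):=\inf_{u\in A}\|z-u\|^2_T$. For $\Xi,N,M\in\mathcal{L}(U;U)$ with $M\ge0$, a map $T:U\rightrightarrows U$ is $(\Xi,N,M)$-partially strongly submonotone at $(\hat u,\hat w)\in\operatorname{graph}T$ if there is a neighbourhood $\mathcal{U}\ni\hat u$ such that $\inf_{u^*\in T^{-1}(\hat w)}(\langle w-\hat w,u-u^*\rangle_N+\|u-u^*\|^2_{M-\Xi})\ge\operatorname{dist}^2_M(u,T^{-1}(\hat w))$ for all $u\in\mathcal{U}$, $w\in T(u)$. Note that for $(x^*,y^* )\in H^{-1}(0)$ one has $-K^*y^*\in\partial G(x^* )$ and $Kx^*\in\partial F^*(y^* )$. *)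

(* Defs.v *)
From mathcomp Require Import all_boot all_algebra all_classical all_reals ereal.
Set Implicit Arguments. Unset Strict Implicit. Unset Printing Implicit Defensive.
Import GRing.Theory Num.Theory.
Local Open Scope ring_scope.
Local Open Scope classical_set_scope.

Definition inner_product (R : realType) (V : lmodType R) (ip : V -> V -> R) :
  Prop :=
  [/\ (forall x y, ip x y = ip y x),
      (forall (a : R) x y z, ip (a *: x + y) z = a * ip x z + ip y z),
      (forall x, 0 <= ip x x) &
      (forall x, ip x x = 0 -> x = 0)].

Definition ipnorm (R : realType) (V : lmodType R) (ip : V -> V -> R) (x : V) :
  R := Num.sqrt (ip x x).

Definition ip_complete (R : realType) (V : lmodType R) (ip : V -> V -> R) :
  Prop :=
  forall u : nat -> V,
    (forall e : R, 0 < e -> exists N : nat, forall m n : nat,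
        (N <= m)%N -> (N <= n)%N -> ipnorm ip (u m - u n) < e) ->
    exists l : V, forall e : R, 0 < e -> exists N : nat, forall n : nat,
        (N <= n)%N -> ipnorm ip (u n - l) < e.

Definition hilbert (R : realType) (V : lmodType R) (ip : V -> V -> R) : Prop :=
  inner_product ip /\ ip_complete ip.

Definition bounded_linear (R : realType) (A B : lmodType R)
  (ipA : A -> A -> R) (ipB : B -> B -> R) (f : A -> B) : Prop :=
  (forall (a : R) x y, f (a *: x + y) = a *: f x + f y) /\
  exists C : R, forall x, ipnorm ipB (f x) <= C * ipnorm ipA x.

Definition is_adjoint (R : realType) (A B : lmodType R)
  (ipA : A -> A -> R) (ipB : B -> B -> R) (K : A -> B) (Kadj : B -> A) : Prop :=
  forall x y, ipB (K x) y = ipA x (Kadj y).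

Definition prod_ip (R : realType) (X Y : lmodType R)
  (ipX : X -> X -> R) (ipY : Y -> Y -> R) (u v : X * Y) : R :=
  ipX u.1 v.1 + ipY u.2 v.2.

(* set-valued maps T : V ⇉ V are represented by their graphs: T u w <-> w ∈ T(u).
   <x,z>_T := <Tx,z>,  ||x||^2_T := <Tx,x>,
   dist^2_T(z,A) := inf_{u in A} ||z-u||^2_T  (an infimum in \bar R). *)
Definition partially_strongly_submonotone (R : realType) (V : lmodType R)
  (ip : V -> V -> R) (T : V -> V -> Prop) (Xi N M : V -> V) (uh wh : V) : Prop :=
  T uh wh /\
  exists d : R, 0 < d /\
    forall u w : V, ipnorm ip (u - uh) < d -> T u w ->
      (ereal_inf [set (ip (M (u - us)) (u - us))%:E | us in [set us | T us wh]]
       <= ereal_inf [set (ip (N (w - wh)) (u - us)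
                          + ip (M (u - us) - Xi (u - us)) (u - us))%:E
                    | us in [set us | T us wh]])%E.

Definition Hop (R : realType) (X Y : lmodType R)
  (dG : X -> X -> Prop) (dFs : Y -> Y -> Prop) (K : X -> Y) (Kadj : Y -> X)
  (u w : X * Y) : Prop :=
  (exists q, dG u.1 q /\ w.1 = q + Kadj u.2) /\
  (exists z, dFs u.2 z /\ w.2 = z - K u.1).

(* Z_{i+1} Ξ_{i+1},  with Ξ(x,y) = (γτ x + 2τ K^* y, −2σ K x + ρσ y),
   Z(a,b) = (φ a, ψ b) *)
Definition ZXi (R : realType) (X Y : lmodType R) (K : X -> Y) (Kadj : Y -> X)
  (tau sigma phi psi gamma rho : R) (u : X * Y) : X * Y :=
  (phi *: ((gamma * tau) *: u.1 + (2 * tau) *: Kadj u.2),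
   psi *: (- ((2 * sigma) *: K u.1) + (rho * sigma) *: u.2)).

Definition twoZW (R : realType) (X Y : lmodType R)
  (tau sigma phi psi : R) (u : X * Y) : X * Y :=
  (2 *: (phi *: (tau *: u.1)), 2 *: (psi *: (sigma *: u.2))).

(* Main.v *)
Require Import Defs.
From mathcomp Require Import all_boot all_algebra all_classical all_reals ereal.
From mathcomp Require Import lra.
Import order.Order.TTheory GRing.Theory Num.Theory.
Local Open Scope ring_scope.
Local Open Scope classical_set_scope.

Section IP.
Variables (R : realType) (V : lmodType R) (ip : V -> V -> R).
Hypothesis hip : inner_product ip.

Lemma ipD x y z : ip (x + y) z = ip x z + ip y z.
Proof. have := hip; rewrite /inner_product => -[_ h _ _]; by rewrite -{1}[x]scale1r h mul1r. Qed.
Lemma ip0 z : ip 0 z = 0.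
Proof. have := ipD 0 0 z; rewrite addr0 => h. apply: (@addrI _ (ip 0 z)); by rewrite addr0 -h. Qed.
Lemma ipZ a x z : ip (a *: x) z = a * ip x z.
Proof. by have := hip; rewrite /inner_product => -[_ h _ _]; rewrite -[a *: x]addr0 h ip0 addr0. Qed.
Lemma ipN x z : ip (- x) z = - ip x z.
Proof. by rewrite -scaleN1r ipZ mulN1r. Qed.
Lemma ipB x y z : ip (x - y) z = ip x z - ip y z.
Proof. by rewrite ipD ipN. Qed.
Lemma ipC x y : ip x y = ip y x.
Proof. by have := hip; rewrite /inner_product => -[]. Qed.
Lemma ipBr x y z : ip z (x - y) = ip z x - ip z y.
Proof. by rewrite ipC ipB (ipC x) (ipC y). Qed.
Lemma ipnorm2 x : ipnorm ip x ^+ 2 = ip x x.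
Proof. by rewrite /ipnorm sqr_sqrtr //; have := hip; rewrite /inner_product => -[]. Qed.
End IP.
Arguments ipD {R V ip}. Arguments ip0 {R V ip}. Arguments ipZ {R V ip}. Arguments ipN {R V ip}. Arguments ipB {R V ip}. Arguments ipC {R V ip}. Arguments ipBr {R V ip}. Arguments ipnorm2 {R V ip}.

Theorem proposition6p1 (R : realType) (X Y : lmodType R)
  (ipX : X -> X -> R) (ipY : Y -> Y -> R)
  (hX : hilbert ipX) (hY : hilbert ipY)
  (K : X -> Y) (Kadj : Y -> X)
  (hK : bounded_linear ipX ipY K) (hKadj : is_adjoint ipX ipY K Kadj)
  (dG : X -> X -> Prop) (dFs : Y -> Y -> Prop)
  (tau sigma phi psi gamma rho : R)
  (htau : 0 < tau) (hsigma : 0 < sigma) (hphi : 0 < phi) (hpsi : 0 < psi)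
  (hgamma : 0 <= gamma) (hrho : 0 <= rho)
  (Z2 M2 : X * Y -> X * Y)
  (hZ2 : bounded_linear (prod_ip ipX ipY) (prod_ip ipX ipY) Z2)
  (hM2 : bounded_linear (prod_ip ipX ipY) (prod_ip ipX ipY) M2)
  (hZM_sa : forall u v, prod_ip ipX ipY (Z2 (M2 u)) v
                        = prod_ip ipX ipY u (Z2 (M2 v)))
  (hZM_psd : forall u, 0 <= prod_ip ipX ipY (Z2 (M2 u)) u)
  (uh : X * Y) (huh : Hop dG dFs K Kadj uh 0)
  (hloc : exists d : R, 0 < d /\
     forall (x : X) (y : Y) (q : X) (z : Y),
       ipnorm (prod_ip ipX ipY) ((x, y) - uh) < d -> dG x q -> dFs y z ->
       (0%:E <= ereal_inf
          [set (ipX (q + Kadj us.2) (x - us.1)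
                - gamma / 2 * ipnorm ipX (x - us.1) ^+ 2)%:E
          | us in [set us | Hop dG dFs K Kadj us (0 : X * Y)%R]])%E /\
       (0%:E <= ereal_inf
          [set (ipY (z - K us.1) (y - us.2)
                - rho / 2 * ipnorm ipY (y - us.2) ^+ 2)%:E
          | us in [set us | Hop dG dFs K Kadj us (0 : X * Y)%R]])%E) :
  partially_strongly_submonotone (prod_ip ipX ipY) (Hop dG dFs K Kadj)
    (ZXi K Kadj tau sigma phi psi gamma rho) (twoZW tau sigma phi psi)
    (fun u => Z2 (M2 u)) uh 0.
Proof.
split => //.
have hXi : inner_product ipX by have := hX; rewrite /hilbert => -[].
have hYi : inner_product ipY by have := hY; rewrite /hilbert => -[].
have Klin : forall a b, K (a - b) = K a - K b.
  move=> a b; case: hK => h _.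
  have K0 : K 0 = 0.
    have := h 1 0 0; rewrite !scale1r !addr0 => e.
    by apply: (@addrI _ (K 0)); rewrite addr0 -{1}e.
  have KN : K (- b) = - K b.
    by have := h (-1) b 0; rewrite addr0 K0 addr0 !scaleN1r.
  by have := h 1 a (- b); rewrite !scale1r KN.
case: hloc => d [d0 hd]; exists d; split => //.
move=> [x y] w hu [[q [hq e1]] [z [hz e2]]].
have [hA hB] := hd x y q z hu hq hz.
apply: le_ereal_inf_tmp => _ [us Hus <-].
apply: (@le_trans _ _ (prod_ip ipX ipY (Z2 (M2 ((x, y) - us))) ((x, y) - us))%:E).
  by apply: ereal_inf_lbound; exists us.
rewrite lee_fin.
have /= A0 := le_trans hA (ereal_inf_lbound (ex_intro2 _ _ us Hus erefl)).
have /= B0 := le_trans hB (ereal_inf_lbound (ex_intro2 _ _ us Hus erefl)).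
move: A0 B0; rewrite !lee_fin.
case: us Hus => xs ys _ /=.
rewrite /prod_ip /twoZW /ZXi /= e1 e2 /=.
rewrite !(ipnorm2 hXi) !(ipnorm2 hYi).
rewrite !subr0.
have adj : forall v a, ipX (Kadj v) a = ipY (K a) v.
  by move=> v a; rewrite (ipC hXi) hKadj.
rewrite ?(ipB hXi, ipD hXi, ipZ hXi, ipN hXi, adj, ipBr hXi, ipB hYi, ipD hYi, ipZ hYi, ipN hYi, Klin, ipBr hYi).
move=> hA0 hB0.
have pA := mulr_ge0 (mulr_ge0 (mulr_ge0 (ler0n _ 2) (ltW hphi)) (ltW htau)) hA0.
have pB := mulr_ge0 (mulr_ge0 (mulr_ge0 (ler0n _ 2) (ltW hpsi)) (ltW hsigma)) hB0.
lra.
Qed.
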